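(* Let $\tau$ be a topology on $\mathbb{R}$ such that $\tau_e\subset\tau$, every nonempty $\tau$-open set has the Baire property and is non-meager, and $\tau_\ast\subset\tau$. Then the class of $\tau_\ast$-Świątkowski functions coincides with the class of $\tau$-Świątkowski functions.
   Context: $\tau_e$ is the Euclidean topology; meagerness and the Baire property refer to $\tau_e$. $\tau_\ast=\{U\setminus M: U\in\tau_e,\ M\text{ meager}\}$. For a topology $\sigma$ and $f\colon\mathbb{R}\to\mathbb{R}$, $\mathrm{C}_\sigma(f)$ is the set of points at which $f\colon(\mathbb{R},\sigma)\to(\mathbb{R},\tau_e)$ is continuous, and $f$ is a $\sigma$-Świątkowski function if for all $a,b$ with $f(a)<f(b)$ there exists $x\in\mathrm{C}_\sigma(f)$ strictly between $a$ and $b$ with $f(a)<f(x)<f(b)$. *)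

(* Defs.v *)
From Stdlib Require Import Reals Lra Classical.
Open Scope R_scope.

Definition set_R := R -> Prop.

Definition is_topology (T : set_R -> Prop) : Prop :=
  T (fun _ => False) /\ T (fun _ => True) /\
  (forall (F : set_R -> Prop), (forall U, F U -> T U) ->
     T (fun x => exists U, F U /\ U x)) /\
  (forall U V, T U -> T V -> T (fun x => U x /\ V x)).

Definition eopen (U : set_R) : Prop :=
  forall x, U x -> exists eps, eps > 0 /\ forall y, Rabs (y - x) < eps -> U y.

Definition interior (A : set_R) : set_R :=
  fun x => exists U, eopen U /\ U x /\ forall y, U y -> A y.

Definition closure (A : set_R) : set_R :=
  fun x => forall U, eopen U -> U x -> exists y, U y /\ A y.

Definition nowhere_dense (A : set_R) : Prop :=
  forall x, ~ interior (closure A) x.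

Definition meager (M : set_R) : Prop :=
  exists N : nat -> set_R, (forall n, nowhere_dense (N n)) /\
    forall x, M x -> exists n, N n x.

Definition baire_property (A : set_R) : Prop :=
  exists U, eopen U /\ meager (fun x => (A x /\ ~ U x) \/ (U x /\ ~ A x)).

Definition tau_star (A : set_R) : Prop :=
  exists U M, eopen U /\ meager M /\ forall x, A x <-> (U x /\ ~ M x).

Definition cont_at (sigma : set_R -> Prop) (f : R -> R) (x : R) : Prop :=
  forall eps, eps > 0 ->
    exists V, sigma V /\ V x /\ forall y, V y -> Rabs (f y - f x) < eps.

Definition swiatkowski (sigma : set_R -> Prop) (f : R -> R) : Prop :=
  forall a b, f a < f b ->
    exists x, Rmin a b < x < Rmax a b /\ cont_at sigma f x /\ f a < f x < f b.

(* Main.v *)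
Require Import Defs.
From Stdlib Require Import Reals Lra Classical IndefiniteDescription Arith Lia.
Open Scope R_scope.

Definition ND' (S : set_R) : Prop :=
  forall p q, p < q -> exists p' q', p < p' /\ p' < q' /\ q' < q /\
    forall y, p' < y < q' -> ~ S y.

Lemma eopen_int l r : eopen (fun y => l < y < r).
Proof.
  intros x Hx. exists (Rmin (x - l) (r - x)). split.
  - apply Rmin_case; lra.
  - intros y Hy. pose proof (Rmin_l (x - l) (r - x)). pose proof (Rmin_r (x - l) (r - x)).
    apply Rabs_def2 in Hy. lra.
Qed.

Lemma ball_in (U : set_R) u l r : eopen U -> U u -> l < u < r ->
  exists d, d > 0 /\ l < u - d /\ u + d < r /\ forall y, u - d < y < u + d -> U y.
Proof.
  intros HU Hu Hlr. destruct (HU u Hu) as [e [He Hb]].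
  set (d := Rmin e (Rmin (u - l) (r - u)) / 2).
  assert (H1 := Rmin_l e (Rmin (u - l) (r - u))).
  assert (H2 := Rmin_r e (Rmin (u - l) (r - u))).
  assert (H3 := Rmin_l (u - l) (r - u)). assert (H4 := Rmin_r (u - l) (r - u)).
  assert (H5 : Rmin e (Rmin (u - l) (r - u)) > 0).
  { apply Rmin_case; [lra| apply Rmin_case; lra]. }
  exists d. unfold d. repeat split; try lra.
  intros y Hy. apply Hb. apply Rabs_def1; lra.
Qed.

Lemma nd_ND' S : nowhere_dense S -> ND' S.
Proof.
  intros H p q Hpq.
  assert (Hy : exists y, p < y < q /\ ~ closure S y).
  { apply NNPP; intro C. apply (H ((p + q) / 2)). exists (fun y => p < y < q).
    split; [apply eopen_int|]. split; [lra|]. intros y Hy. apply NNPP; intro Hc.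
    apply C; eauto. }
  destruct Hy as [y [Hy Hc]]. unfold closure in Hc.
  apply not_all_ex_not in Hc. destruct Hc as [U HU].
  apply imply_to_and in HU. destruct HU as [HUo HU].
  apply imply_to_and in HU. destruct HU as [HUy HU].
  destruct (ball_in U y p q HUo HUy Hy) as [d [Hd [H1 [H2 H3]]]].
  exists (y - d / 2), (y + d / 2). repeat split; try lra.
  intros w Hw Sw. apply HU. exists w. split; [apply H3; lra| exact Sw].
Qed.

Lemma ND'_mono (A B : set_R) : (forall x, A x -> B x) -> ND' B -> ND' A.
Proof.
  intros HAB HB p q Hpq. destruct (HB p q Hpq) as [p' [q' [H1 [H2 [H3 H4]]]]].
  exists p', q'. repeat split; auto. intros y Hy Ay. exact (H4 y Hy (HAB y Ay)).
Qed.

Lemma ND'_false : ND' (fun _ => False).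
Proof. intros p q Hpq. exists ((2*p+q)/3), ((p+2*q)/3). repeat split; try lra. auto. Qed.

Lemma ND'_union A B : ND' A -> ND' B -> ND' (fun x => A x \/ B x).
Proof.
  intros HA HB p q Hpq. destruct (HA p q Hpq) as [p1 [q1 [H1 [H2 [H3 H4]]]]].
  destruct (HB p1 q1 H2) as [p2 [q2 [G1 [G2 [G3 G4]]]]].
  exists p2, q2. repeat split; try lra. intros y Hy [Ay|By].
  - apply (H4 y); [lra| exact Ay].
  - apply (G4 y Hy By).
Qed.

Lemma ND'_fin (Q : nat -> set_R) m : (forall j, ND' (Q j)) ->
  ND' (fun x => exists j, (j < m)%nat /\ Q j x).
Proof.
  intros HQ. induction m.
  - apply (ND'_mono _ (fun _ => False)); [| apply ND'_false].
    intros x [j [Hj _]]. lia.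
  - apply (ND'_mono _ (fun x => (exists j, (j < m)%nat /\ Q j x) \/ Q m x)).
    + intros x [j [Hj Qx]]. destruct (Nat.eq_dec j m) as [->|Hne]; [right; auto|].
      left. exists j. split; [lia|auto].
    + apply ND'_union; auto.
Qed.

Lemma ND'_fin2 (P : nat -> nat -> set_R) m : (forall j k, nowhere_dense (P j k)) ->
  ND' (fun y => exists j k, (j <= m)%nat /\ (k <= m)%nat /\ P j k y).
Proof.
  intros HP.
  apply (ND'_mono _ (fun y => exists j, (j < S m)%nat /\
           (fun x => exists k, (k < S m)%nat /\ P j k x) y)).
  - intros y [j [k [Hj [Hk Hy]]]]. exists j. split; [lia|]. exists k. split; [lia|auto].
  - apply ND'_fin. intros j. apply ND'_fin. intros k. apply nd_ND'. auto.
Qed.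

Lemma meager_mono (A B : set_R) : meager A -> (forall x, B x -> A x) -> meager B.
Proof. intros [N [HN HA]] H. exists N. split; auto. Qed.

Lemma nd_false : nowhere_dense (fun _ => False).
Proof.
  intros x [U [HU [Ux HUc]]]. destruct (HUc x Ux (fun _ => True)) as [y [_ []]].
  - intros z _. exists 1. split; [lra| auto].
  - exact I.
Qed.

Lemma meager_false : meager (fun _ => False).
Proof. exists (fun _ _ => False). split; [intros; apply nd_false| intros x []]. Qed.

Lemma tau_star_eopen U : eopen U -> tau_star U.
Proof.
  intros HU. exists U, (fun _ => False). split; [auto|]. split; [apply meager_false|].
  intros x. tauto.
Qed.

Definition Inv (l0 r0 l r : R) (P : nat -> nat -> set_R) : Prop :=
  l0 <= l /\ l < r /\ r <= r0 /\ forall j k, nowhere_dense (P j k).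

Definition Good (f : R -> R) (m : nat) (l r : R) (P : nat -> nat -> set_R)
  (l' r' : R) (P' : nat -> nat -> set_R) : Prop :=
  l < l' /\ l' < r' /\ r' < r /\ (forall j, j <> S m -> P' j = P j) /\
  (forall j k, nowhere_dense (P' j k)) /\
  (forall y, l' < y < r' -> ~ exists j k, (j <= m)%nat /\ (k <= m)%nat /\ P j k y) /\
  exists x (V : set_R), (forall y, V y -> Rabs (f y - f x) < / INR (S m)) /\
    (forall y, l' < y < r' /\ ~ V y -> exists k, P' (S m) k y).

Lemma step_ex (tau : set_R -> Prop) (Htop : is_topology tau)
  (Heo : forall U, eopen U -> tau U)
  (Hbp : forall U, tau U -> (exists x, U x) -> baire_property U /\ ~ meager U)
  (f : R -> R) (l0 r0 : R)
  (Hnc : forall l r, l0 <= l -> l < r -> r <= r0 -> exists x, l < x < r /\ cont_at tau f x)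
  m l r P : Inv l0 r0 l r P -> exists l' r' P', Good f m l r P l' r' P'.
Proof.
  intros [Hl [Hlr [Hr HP]]].
  destruct (Hnc l r Hl Hlr Hr) as [x [Hx Hc]].
  assert (He: / INR (S m) > 0) by (apply Rinv_0_lt_compat; apply lt_0_INR; lia).
  destruct (Hc _ He) as [V0 [HV0 [V0x HV0b]]].
  set (V := fun y => V0 y /\ l < y < r).
  assert (HV: tau V).
  { destruct Htop as [_ [_ [_ Hi]]]. apply Hi; auto. apply Heo, eopen_int. }
  destruct (Hbp V HV) as [[U [HU [N [HN HNc]]]] HnV]. { exists x. split; auto. }
  assert (Hu: exists u, U u /\ l < u < r).
  { apply NNPP; intro C. apply HnV. exists N. split; auto. intros y [V0y Hy].
    apply HNc. left. split. split; auto. intro Uy. apply C; eauto. }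
  destruct Hu as [u [Uu Hu]].
  destruct (ball_in U u l r HU Uu Hu) as [d [Hd [H1 [H2 H3]]]].
  destruct (ND'_fin2 P m HP (u-d) (u+d)) as [l' [r' [G1 [G2 [G3 G4]]]]]; [lra|].
  exists l', r', (fun j => if Nat.eqb j (S m) then N else P j).
  repeat split; try lra.
  - intros j Hj. apply Nat.eqb_neq in Hj. rewrite Hj. reflexivity.
  - intros j k. destruct (Nat.eqb j (S m)); auto.
  - intros y Hy. apply G4; lra.
  - exists x, V. split.
    + intros y [V0y _]. auto.
    + intros y [Hy nV]. rewrite Nat.eqb_refl. apply HNc. right.
      split; [apply H3; lra| exact nV].
Qed.

Lemma baire_construct (tau : set_R -> Prop) (Htop : is_topology tau)
  (Heo : forall U, eopen U -> tau U)
  (Hbp : forall U, tau U -> (exists x, U x) -> baire_property U /\ ~ meager U)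
  (f : R -> R) (l0 r0 : R) (P0 : nat -> nat -> set_R) :
  l0 < r0 -> (forall j k, nowhere_dense (P0 j k)) ->
  (forall l r, l0 <= l -> l < r -> r <= r0 -> exists x, l < x < r /\ cont_at tau f x) ->
  exists z, l0 < z < r0 /\ cont_at tau_star f z /\
   (forall W : set_R, (forall y, l0 < y < r0 /\ ~ W y -> exists k, P0 0%nat k y) -> W z).
Proof.
  intros Hlr HP0 Hnc.
  assert (Hex: forall m (s : R*R*(nat->nat->set_R)), exists s' : R*R*(nat->nat->set_R),
    Inv l0 r0 (fst (fst s)) (snd (fst s)) (snd s) ->
    Good f m (fst (fst s)) (snd (fst s)) (snd s) (fst (fst s')) (snd (fst s')) (snd s')).
  { intros m [[l r] P]. simpl. destruct (classic (Inv l0 r0 l r P)) as [HI|HI].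
    - destruct (step_ex tau Htop Heo Hbp f l0 r0 Hnc m l r P HI) as [l' [r' [P' HG]]].
      exists (l', r', P'). auto.
    - exists (l, r, P). intro; contradiction. }
  pose (stepF := fun m s => proj1_sig (constructive_indefinite_description _ (Hex m s))).
  pose (st := fix st (n : nat) : R*R*(nat->nat->set_R) :=
          match n with O => (l0, r0, P0) | S n => stepF n (st n) end).
  pose (L := fun n => fst (fst (st n))). pose (Rr := fun n => snd (fst (st n))).
  pose (PP := fun n => snd (st n)).
  assert (Hgood : forall n, Inv l0 r0 (L n) (Rr n) (PP n) ->
            Good f n (L n) (Rr n) (PP n) (L (S n)) (Rr (S n)) (PP (S n))).
  { intros n HI. exact (proj2_sig (constructive_indefinite_description _ (Hex n (st n))) HI). }
  assert (Hinv : forall n, Inv l0 r0 (L n) (Rr n) (PP n)).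
  { induction n.
    - unfold Inv, L, Rr, PP. simpl. repeat split; try lra; auto.
    - destruct (Hgood n IHn) as [G1 [G2 [G3 [_ [G5 _]]]]].
      destruct IHn as [I1 [I2 [I3 _]]].
      unfold Inv. repeat split; try lra. auto. }
  assert (HG : forall n, Good f n (L n) (Rr n) (PP n) (L (S n)) (Rr (S n)) (PP (S n)))
    by (intro n; apply Hgood, Hinv).
  assert (HLmono : forall n k, (n <= k)%nat -> L n <= L k).
  { intros n k Hnk. induction Hnk; [lra|]. destruct (HG m) as [G1 _]. lra. }
  assert (HRmono : forall n k, (n <= k)%nat -> Rr k <= Rr n).
  { intros n k Hnk. induction Hnk; [lra|]. destruct (HG m) as [_ [_ [G3 _]]]. lra. }
  assert (HLR : forall n k, L n < Rr k).
  { intros n k. pose proof (HLmono n (max n k) ltac:(lia)).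
    pose proof (HRmono k (max n k) ltac:(lia)).
    destruct (Hinv (max n k)) as [_ [Hm _]]. lra. }
  destruct (completeness (fun v => exists n, v = L n)) as [z [Hub Hlub]].
  { exists (Rr 0%nat). intros v [n ->]. left. apply HLR. }
  { exists (L 0%nat). eauto. }
  assert (Hz : forall n, L n < z < Rr n).
  { intros n. destruct (HG n) as [G1 [_ [G3 _]]]. split.
    - assert (L (S n) <= z) by (apply Hub; eauto). lra.
    - assert (z <= Rr (S n)).
      { apply Hlub. intros v [k ->]. left. apply HLR. }
      lra. }
  assert (Hstab : forall j t, (j <= t)%nat -> PP t j = PP j j).
  { intros j t Hjt. induction Hjt; auto.
    destruct (HG m) as [_ [_ [_ [G4 _]]]]. rewrite G4; [auto| lia]. }
  assert (Havoid : forall j (W : set_R),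
            (forall y, L j < y < Rr j /\ ~ W y -> exists k, PP j j k y) -> W z).
  { intros j W HW. apply NNPP; intro nW.
    destruct (HW z (conj (Hz j) nW)) as [k Hk].
    set (t := max j k).
    destruct (HG t) as [_ [_ [_ [_ [_ [G6 _]]]]]].
    apply (G6 z (Hz (S t))). exists j, k. split; [lia|]. split; [lia|].
    rewrite (Hstab j t); [exact Hk| lia]. }
  exists z. split; [|split].
  - pose proof (Hz 0%nat). unfold L, Rr in H; simpl in H. lra.
  - intros eps Heps.
    destruct (archimed_cor1 (eps / 2)) as [N [HN HN0]]; [lra|].
    destruct N as [|m]; [lia|].
    destruct (HG m) as [_ [_ [_ [_ [_ [_ [x [V [Hb Hcov]]]]]]]]].
    assert (Vz : V z).
    { apply (Havoid (S m)). intros y Hy. apply Hcov. exact Hy. }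
    exists (fun y => L (S m) < y < Rr (S m) /\ V y). split; [|split].
    + exists (fun y => L (S m) < y < Rr (S m)), (fun y => L (S m) < y < Rr (S m) /\ ~ V y).
      split; [apply eopen_int|]. split.
      * exists (PP (S m) (S m)). split.
        -- destruct (Hinv (S m)) as [_ [_ [_ H]]]. auto.
        -- intros y Hy. apply Hcov. exact Hy.
      * intros y. split.
        -- intros [Hy Vy]. split; [auto| tauto].
        -- intros [Hy nM]. split; [auto|]. apply NNPP; intro nV. apply nM. auto.
    + split; [apply Hz| exact Vz].
    + intros y [_ Vy]. pose proof (Hb y Vy). pose proof (Hb z Vz).
      assert (Rabs (f y - f z) <= Rabs (f y - f x) + Rabs (f z - f x)).
      { replace (f y - f z) with ((f y - f x) + - (f z - f x)) by ring.
        rewrite <- (Rabs_Ropp (f z - f x)). apply Rabs_triang. }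
      lra.
  - intros W HW. apply (Havoid 0%nat). exact HW.
Qed.

Theorem mainTheorem15 (tau : set_R -> Prop) :
  is_topology tau ->
  (forall U, eopen U -> tau U) ->
  (forall U, tau U -> (exists x, U x) -> baire_property U /\ ~ meager U) ->
  (forall U, tau_star U -> tau U) ->
  forall f : R -> R, swiatkowski tau_star f <-> swiatkowski tau f.
Proof.
  intros Htop Heo Hbp Hst f. split.
  - intros Hs a b Hab. destruct (Hs a b Hab) as [x [Hx [Hc Hf]]].
    exists x. split; auto. split; auto.
    intros eps Heps. destruct (Hc eps Heps) as [V [HV HVb]]. exists V. split; auto.
  - intros Hs a b Hab. apply NNPP; intro Hno.
    destruct (Hs a b Hab) as [x0 [Hx0 [Hc0 Hf0]]].
    set (e0 := Rmin (f x0 - f a) (f b - f x0)).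
    assert (He0 : e0 > 0) by (unfold e0; apply Rmin_case; lra).
    assert (He1 := Rmin_l (f x0 - f a) (f b - f x0)).
    assert (He2 := Rmin_r (f x0 - f a) (f b - f x0)).
    fold e0 in He1, He2.
    destruct (Hc0 e0 He0) as [V0 [HV0 [V0x HV0b]]].
    set (V := fun y => V0 y /\ Rmin a b < y < Rmax a b).
    assert (HV: tau V).
    { destruct Htop as [_ [_ [_ Hi]]]. apply Hi; auto. apply Heo, eopen_int. }
    destruct (Hbp V HV) as [[U [HU [N [HN HNc]]]] HnV]. { exists x0. split; auto. }
    assert (Hu: exists u, U u /\ Rmin a b < u < Rmax a b).
    { apply NNPP; intro C. apply HnV. exists N. split; auto. intros y [V0y Hy].
      apply HNc. left. split. split; auto. intro Uy. apply C; eauto. }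
    destruct Hu as [u [Uu Hu]].
    destruct (ball_in U u _ _ HU Uu Hu) as [d [Hd [H1 [H2 H3]]]].
    assert (Hcov : forall y, u - d < y < u + d /\ ~ V y -> exists k, N k y).
    { intros y [Hy nV]. apply HNc. right. split; [apply H3; lra| exact nV]. }
    assert (Hgood : forall y, V y -> cont_at tau_star f y -> False).
    { intros y [V0y Hy] Hcy. apply Hno. exists y. split; auto. split; auto.
      pose proof (HV0b y V0y). apply Rabs_def2 in H. lra. }
    assert (Hnc : forall l r, u - d <= l -> l < r -> r <= u + d ->
                   exists x, l < x < r /\ cont_at tau f x).
    { intros l r Hl Hlr Hr. apply NNPP; intro C.
      assert (Hconst : forall p q, l < p < r -> l < q < r -> f p = f q).
      { assert (Hle : forall p q, l < p < r -> l < q < r -> ~ f p < f q).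
        { intros p q Hp Hq Hpq. destruct (Hs p q Hpq) as [x [Hx [Hcx _]]].
          apply C. exists x. split; [|auto].
          pose proof (Rmin_l p q). pose proof (Rmin_r p q).
          pose proof (Rmax_l p q). pose proof (Rmax_r p q).
          destruct (Rle_dec p q).
          - rewrite Rmin_left in Hx by lra. rewrite Rmax_right in Hx by lra. lra.
          - rewrite Rmin_right in Hx by lra. rewrite Rmax_left in Hx by lra. lra. }
        intros p q Hp Hq. pose proof (Hle p q Hp Hq). pose proof (Hle q p Hq Hp). lra. }
      assert (Hy : exists y, l < y < r /\ V y).
      { apply NNPP; intro Cy.
        destruct (Hbp (fun y => l < y < r)) as [_ Hnm].
        - apply Heo, eopen_int.
        - exists ((l + r) / 2). lra.
        - apply Hnm. exists N. split; auto. intros y Hy. apply Hcov. split; [lra|].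
          intro Vy. apply Cy. eauto. }
      destruct Hy as [y [Hy Vy]]. apply (Hgood y Vy).
      intros eps Heps. exists (fun w => l < w < r). split; [apply tau_star_eopen, eopen_int|].
      split; auto. intros w Hw. rewrite (Hconst w y Hw Hy). rewrite Rminus_diag, Rabs_R0. lra. }
    destruct (baire_construct tau Htop Heo Hbp f (u - d) (u + d) (fun _ => N))
      as [z [Hz [Hcz HW]]]; [lra| auto| exact Hnc|].
    apply (Hgood z); auto. apply HW. exact Hcov.
Qed.
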